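(* Let $G$ be a loopless multigraph with $n$ vertices, $m$ edges and maximum degree $\Delta$, and let $q\in\mathbb{N}$ and $\lambda\ge1$. Then $$Z(G,\lambda,q)\le\left(1+q^{-1}(\lambda^\Delta-1)\right)^{\lceil m/\Delta\rceil}q^n.$$ Moreover, if $\Delta$ divides $m$ and $2m/\Delta\le n$, equality holds for $G=H(n,m,\Delta)$.
   Context: For a loopless multigraph $G=(V,E)$ (multiple edges allowed), $Z(G,\lambda,q)=\sum_{\sigma\in[q]^V}\lambda^{\mu(\sigma)}$, where $\mu(\sigma)$ is the number of edges (counted with multiplicity) whose two endpoints receive the same colour under $\sigma$. For positive integers $n,m,\Delta$ with $\Delta\mid m$ and $m\le\Delta n/2$, $H(n,m,\Delta)$ is the multigraph on $n$ vertices obtained by taking $m/\Delta$ pairwise disjoint (independent) edges and replacing each by $\Delta$ parallel edges. *)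

(* Defs.v *)
From HB Require Import structures.
From mathcomp Require Import all_boot all_order all_algebra.
Set Implicit Arguments. Unset Strict Implicit. Unset Printing Implicit Defensive.
Import Order.TTheory GRing.Theory Num.Theory.

(* A loopless multigraph on a finite vertex type V is given by its edge list
   E : seq (V * V); parallel edges are repeated entries.  n = #|V|, m = size E. *)
Definition loopless (V : eqType) (E : seq (V * V)) : bool :=
  all (fun e => e.1 != e.2) E.

Definition deg (V : eqType) (E : seq (V * V)) (v : V) : nat :=
  count (fun e => (e.1 == v) || (e.2 == v)) E.

Definition maxdeg (V : finType) (E : seq (V * V)) : nat :=
  \max_(v : V) deg E v.

Definition mu (V : finType) (q : nat) (E : seq (V * V)) (s : {ffun V -> 'I_q}) : nat :=
  count (fun e => s e.1 == s e.2) E.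

Definition Zpart (R : realFieldType) (V : finType) (E : seq (V * V)) (lam : R) (q : nat) : R :=
  (\sum_(s : {ffun V -> 'I_q}) lam ^+ mu E s)%R.

(* ceiling of m / d (for d = 0 this is 0) *)
Definition ceildiv (m d : nat) : nat := (m + d.-1) %/ d.

Definition Zbound (R : realFieldType) (lam : R) (q n m D : nat) : R :=
  ((1 + (q%:R)^-1 * (lam ^+ D - 1)) ^+ ceildiv m D * (q%:R) ^+ n)%R.

(* H(n,m,D): on vertex set 'I_n, the m/D disjoint edges {2i, 2i+1} (i < m/D),
   each repeated D times. *)
Definition Hpairs (m D : nat) : seq (nat * nat) :=
  flatten [seq nseq D (2 * i, (2 * i).+1) | i <- iota 0 (m %/ D)].

Definition Hedges (n m D : nat) : seq ('I_n * 'I_n) :=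
  pmap (fun p : nat * nat =>
          match insub p.1, insub p.2 with
          | Some a, Some b => Some (a, b)
          | _, _ => None
          end) (Hpairs m D).

(* Main.v *)
Require Import Defs.
From HB Require Import structures.
From mathcomp Require Import all_boot all_order all_algebra.
From mathcomp Require Import zify ring lra.
Import Order.TTheory GRing.Theory Num.Theory.
Local Open Scope ring_scope.

Section Aux.
Variable R : realFieldType.
Variable q : nat.
Variable lam : R.
Hypothesis q0 : (0 < q)%N.
Hypothesis lam1 : 1 <= lam.

Definition h (k : nat) : R := 1 + (q%:R)^-1 * (lam ^+ k - 1).

Lemma lamX_ge1 k : 1 <= lam ^+ k.
Proof. exact: exprn_ege1. Qed.

Lemma h_ge1 k : 1 <= h k.
Proof.
rewrite /h lerDl; apply: mulr_ge0; first by rewrite invr_ge0 ler0n.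
by rewrite subr_ge0 lamX_ge1.
Qed.

Lemma h_ge0 k : 0 <= h k.
Proof. exact: le_trans (h_ge1 k). Qed.

Lemma h0 : h 0 = 1.
Proof. by rewrite /h expr0 subrr mulr0 addr0. Qed.

Lemma qh k : q%:R * h k = lam ^+ k + (q%:R - 1).
Proof.
have qn0 : (q%:R : R) != 0 by rewrite pnatr_eq0 -lt0n.
rewrite /h mulrDr mulr1 mulrA mulfV // mul1r; ring.
Qed.

Lemma key e s t : h (e + s) * h (e + t) <= h (e + s + t) * h e.
Proof.
rewrite /h !exprD.
set A := lam ^+ e; set S := lam ^+ s; set T := lam ^+ t.
set u := (q%:R : R)^-1.
have hA : 1 <= A := lamX_ge1 e.
have hS : 1 <= S := lamX_ge1 s.
have hT : 1 <= T := lamX_ge1 t.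
have hq : (1 : R) <= q%:R by rewrite ler1n.
have hu0 : 0 < u by rewrite /u invr_gt0; lra.
have hu1 : u <= 1 by rewrite /u invf_le1 //; lra.
have E : (1 + u * (A * S * T - 1)) * (1 + u * (A - 1)) -
   (1 + u * (A * S - 1)) * (1 + u * (A * T - 1)) =
   u * A * (S - 1) * (T - 1) * (1 - u) by ring.
rewrite -subr_ge0 E.
repeat apply: mulr_ge0; lra.
Qed.

Lemma key2 a b c e : (a + b = c + e)%N -> (e <= a)%N -> (a <= c)%N ->
  h a * h b <= h c * h e.
Proof.
move=> H1 H2 H3.
have := key e (a - e) (c - a).
have -> : (e + (a - e))%N = a by lia.
have -> : (e + (c - a))%N = b by lia.
by have -> : (a + (c - a))%N = c by lia.
Qed.

Definition G D x := h D ^+ (x %/ D) * h (x %% D).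

Lemma step_arith D d a : (0 < d)%N -> (d <= D)%N -> h d * G D a <= G D (a + d).
Proof.
move=> d0 dD.
have D0 : (0 < D)%N by apply: leq_trans dD.
rewrite /G.
have Ea := div.divn_eq a D.
have rD : (a %% D < D)%N := ltn_pmod a D0.
move: Ea rD; set j := (a %/ D)%N; set r := (a %% D)%N => Ea rD.
rewrite Ea -addnA.
case: (ltnP (r + d) D) => H.
  rewrite divnMDl // modnMDl divn_small // modn_small // addn0.
  rewrite mulrCA; apply: ler_wpM2l; first by rewrite exprn_ge0 // h_ge0.
  have := key2 r d (r + d) 0.
  rewrite h0 mulr1 mulrC; apply => //; lia.
have -> : (j * D + (r + d) = j.+1 * D + (r + d - D))%N by rewrite mulSn; lia.
rewrite divnMDl // modnMDl divn_small ?modn_small; try lia.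
rewrite addn0 exprS -mulrA mulrCA [in X in _ <= X]mulrCA; apply: ler_wpM2l; first by rewrite exprn_ge0 // h_ge0.
rewrite mulrC; apply: key2; lia.
Qed.

Lemma G_ceil D m : (0 < D)%N -> G D m <= h D ^+ ceildiv m D.
Proof.
move=> D0; rewrite /G /ceildiv.
have Ea := div.divn_eq m D.
have rD : (m %% D < D)%N := ltn_pmod m D0.
move: Ea rD; set j := (m %/ D)%N; set r := (m %% D)%N => Ea rD.
rewrite Ea.
case: (posnP r) => [->|r0].
  rewrite h0 mulr1 addn0 divnMDl // divn_small ?addn0 //; lia.
have -> : (j * D + r + D.-1 = j.+1 * D + (r - 1))%N by rewrite mulSn; lia.
rewrite divnMDl // divn_small ?addn0; last by lia.
rewrite exprSr; apply: ler_wpM2l; first by rewrite exprn_ge0 // h_ge0.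
rewrite /h lerD2l; apply: ler_wpM2l; first by rewrite invr_ge0 ler0n.
rewrite lerD2r.
have -> : (D = r + (D - r))%N by lia.
rewrite exprD -[X in X <= _]mulr1; apply: ler_wpM2l; last exact: lamX_ge1.
exact: le_trans ler01 (lamX_ge1 r).
Qed.

Section Graph.
Variable V : finType.
Implicit Types (E : seq (V * V)) (s : {ffun V -> 'I_q}).

Definition upd s (v : V) (c : 'I_q) : {ffun V -> 'I_q} :=
  [ffun x => if x == v then c else s x].

Definition inc (v : V) := fun e : V * V => (e.1 == v) || (e.2 == v).

Lemma avg (v : V) (F : {ffun V -> 'I_q} -> R) :
  q%:R * \sum_s F s = \sum_s \sum_(c : 'I_q) F (upd s v c).
Proof.
rewrite pair_big /=.
pose phi (p : {ffun V -> 'I_q} * 'I_q) := (upd p.1 v p.2, p.1 v).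
have phiK : involutive phi.
  move=> [s c]; rewrite /phi /= /upd ffunE eqxx; congr (_, _).
  by apply/ffunP => x; rewrite !ffunE; case: eqP => [->|].
have -> : \sum_(p : {ffun V -> 'I_q} * 'I_q) F (upd p.1 v p.2) =
   \sum_(p : {ffun V -> 'I_q} * 'I_q) F p.1.
  by rewrite [RHS](reindex_inj (inv_inj phiK)).
have -> : \sum_(p : {ffun V -> 'I_q} * 'I_q) F p.1 =
   \sum_s \sum_(c : 'I_q) F s by rewrite pair_big.
rewrite mulr_sumr; apply: eq_bigr => s _.
by rewrite sumr_const card_ord mulr_natl.
Qed.

Lemma mu_cat E1 E2 s : mu (E1 ++ E2) s = (mu E1 s + mu E2 s)%N.
Proof. exact: count_cat. Qed.

Lemma mu_upd_nonadj (v : V) E s c : all (fun e => ~~ inc v e) E ->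
  mu E (upd s v c) = mu E s.
Proof.
move=> /allP H; apply: eq_in_count => e /H.
rewrite /inc negb_or => /andP[/negbTE h1 /negbTE h2].
by rewrite !ffunE h1 h2.
Qed.

Lemma vertex_eq (v : V) E1 E2 : all (fun e => ~~ inc v e) E1 ->
  q%:R * Zpart (E1 ++ E2) lam q =
  \sum_s lam ^+ mu E1 s * \sum_(c : 'I_q) lam ^+ mu E2 (upd s v c).
Proof.
move=> H; rewrite /Zpart (avg v); apply: eq_bigr => s _.
rewrite mulr_sumr; apply: eq_bigr => c _.
by rewrite mu_cat exprD mu_upd_nonadj.
Qed.

Lemma sum_eq1 (w : 'I_q) : (\sum_(c : 'I_q) (c == w))%N = 1%N.
Proof.
rewrite (bigD1 w) //= eqxx big1 // => c /negbTE ->; done.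
Qed.

Lemma sum_mu_inc (v : V) E s : all (inc v) E -> loopless E ->
  (\sum_(c : 'I_q) mu E (upd s v c))%N = size E.
Proof.
elim: E => [|e E IH] /=; first by move=> _ _; rewrite big1.
move=> /andP[ie iE] /andP[le lE].
rewrite big_split /= IH //.
suff -> : (\sum_(i < q) (upd s v i e.1 == upd s v i e.2))%N = 1%N by [].
move: ie le; rewrite /inc; case: (eqVneq e.1 v) => [h1|h1] /= h2 ne.
  have h2' : (e.2 == v) = false.
    by apply/negbTE; move: ne; rewrite h1 eq_sym.
  under eq_bigr do rewrite !ffunE h1 eqxx h2'.
  exact: sum_eq1.
under eq_bigr do rewrite !ffunE (negbTE h1) h2 eq_sym.
exact: sum_eq1.
Qed.

Lemma superadd (r : seq 'I_q) (k : 'I_q -> nat) :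
  \sum_(i <- r) (lam ^+ k i - 1) <= lam ^+ (\sum_(i <- r) k i)%N - 1.
Proof.
elim: r => [|x r IH]; first by rewrite !big_nil expr0 subrr.
rewrite !big_cons exprD.
apply: le_trans (lerD (lexx _) IH) _.
have h1 := lamX_ge1 (k x); have h2 := lamX_ge1 (\sum_(i <- r) k i)%N.
set a := lam ^+ k x in h1 *; set b := lam ^+ _ in h2 *.
have -> : a * b - 1 = (a - 1) + (b - 1) + (a - 1) * (b - 1) by ring.
rewrite lerDl; apply: mulr_ge0; lra.
Qed.

Lemma sum_inc_bound (v : V) E s : all (inc v) E -> loopless E ->
  \sum_(c : 'I_q) lam ^+ mu E (upd s v c) <= lam ^+ size E + (q%:R - 1).
Proof.
move=> H1 H2.
rewrite -(sum_mu_inc v E s H1 H2).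
have := superadd (index_enum 'I_q) (fun c => mu E (upd s v c)).
rewrite sumrB sumr_const card_ord => h; lra.
Qed.


Lemma Z_nil : Zpart ([::] : seq (V * V)) lam q = q%:R ^+ #|V|.
Proof.
rewrite /Zpart (eq_bigr (fun _ => 1)) => [|s _]; last by rewrite expr0.
by rewrite sumr_const card_ffun card_ord natrX.
Qed.

Lemma count_split (T : Type) (p a : pred T) (s : seq T) :
  count p s = (count p (filter (fun x => ~~ a x) s) + count p (filter a s))%N.
Proof.
elim: s => //= x s IH; rewrite {1}IH; case: (a x) => /=; [exact: addnCA | exact: addnA].
Qed.

Lemma bound_ind D : (0 < D)%N -> forall N E, (size E <= N)%N -> loopless E ->
  (forall u, deg E u <= D)%N -> Zpart E lam q <= q%:R ^+ #|V| * G D (size E).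
Proof.
move=> D0; elim=> [|N IH] E.
  rewrite leqn0 => /nilP -> _ _.
  by rewrite Z_nil /G div0n mod0n expr0 h0 !mulr1.
case: E => [|e E0] sE lE dE.
  by rewrite Z_nil /G div0n mod0n expr0 h0 !mulr1.
set E := e :: E0 in sE lE dE *.
set v := e.1.
set E1 := filter (fun x => ~~ inc v x) E.
set E2 := filter (inc v) E.
have hd : size E2 = deg E v by rewrite size_filter.
have d0 : (0 < size E2)%N by rewrite hd /deg /= eqxx.
have hs : (size E1 + size E2 = size E)%N.
  by rewrite !size_filter addnC; exact: count_predC.
have ZE : Zpart E lam q = Zpart (E1 ++ E2) lam q.
  apply: eq_bigr => s _; rewrite mu_cat /mu.
  by rewrite -(count_split _ _ (inc v) E).
have n1 : all (fun e => ~~ inc v e) E1 by apply/allP => x; rewrite mem_filter => /andP[].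
have i2 : all (inc v) E2 by apply/allP => x; rewrite mem_filter => /andP[].
have l1 : loopless E1.
  by apply/allP => x; rewrite mem_filter => /andP[_ xE]; exact: (allP lE x xE).
have l2 : loopless E2.
  by apply/allP => x; rewrite mem_filter => /andP[_ xE]; exact: (allP lE x xE).
have dE1 : forall u, (deg E1 u <= D)%N.
  move=> u; apply: leq_trans (dE u); rewrite /deg /E1 [X in (_ <= X)%N](count_split _ (fun e => (e.1 == u) || (e.2 == u)) (inc v) E).
  exact: leq_addr.
have IH1 := IH E1 ltac:(lia) l1 dE1.
have qpos : (0 : R) < q%:R by rewrite ltr0n.
have Hq : q%:R * Zpart E lam q <= q%:R * (Zpart E1 lam q * h (size E2)).
  rewrite ZE (vertex_eq v E1 E2 n1) mulrCA (qh (size E2)) /Zpart mulr_suml.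
  apply: ler_sum => s _; apply: ler_wpM2l.
    exact: le_trans ler01 (lamX_ge1 _).
  exact: sum_inc_bound.
rewrite ler_pM2l // in Hq.
apply: le_trans Hq _.
rewrite -hs mulrC.
apply: le_trans (ler_wpM2l (h_ge0 _) IH1) _.
rewrite mulrCA; apply: ler_wpM2l.
  by rewrite exprn_ge0 // ler0n.
apply: step_arith => //; rewrite hd; exact: dE.
Qed.

End Graph.

Definition fH n := fun p : nat * nat =>
  (match insub p.1, insub p.2 with
   | Some a, Some b => Some (a, b)
   | _, _ => None
   end : option ('I_n * 'I_n)).

Definition Lk n D k :=
  pmap (fH n) (flatten [seq nseq D (2 * i, (2 * i).+1) | i <- iota 0 k]).

Lemma Hedges_Lk n m D : Hedges n m D = Lk n D (m %/ D).
Proof. by []. Qed.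

Lemma Lk_step n D k (ha : (2 * k < n)%N) (hb : ((2 * k).+1 < n)%N) :
  Lk n D k.+1 = Lk n D k ++ nseq D (Ordinal ha, Ordinal hb).
Proof.
have -> : k.+1 = (k + 1)%N by rewrite addn1.
rewrite /Lk iotaD map_cat flatten_cat pmap_cat /= cats0 add0n.
congr (_ ++ _); elim: D => //= D ->.
rewrite /fH /= (insubT (fun x => x < n)%N ha) (insubT (fun x => x < n)%N hb).
by [].
Qed.

Lemma inner_sum (w : 'I_q) D :
  \sum_(c : 'I_q) lam ^+ ((c == w) * D)%N = lam ^+ D + (q%:R - 1).
Proof.
rewrite (eq_bigr (fun c => 1 + (c == w)%:R * (lam ^+ D - 1))); last first.
  by move=> c _; case: (c == w); rewrite /= ?mul1n ?mul0n ?expr0; ring.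
rewrite big_split /= sumr_const card_ord -mulr_suml -natr_sum sum_eq1.
ring.
Qed.

Lemma Lk_prop n D k : (2 * k <= n)%N ->
  all (fun e : 'I_n * 'I_n => (val e.1 < 2 * k) && (val e.2 < 2 * k))%N (Lk n D k) /\
  Zpart (Lk n D k) lam q = q%:R ^+ n * h D ^+ k.
Proof.
elim: k => [|k IH] hk.
  by split => //; rewrite /Lk /= Z_nil card_ord expr0 mulr1.
have ha : (2 * k < n)%N by lia.
have hb : ((2 * k).+1 < n)%N by lia.
have [IHa IHz] := IH ltac:(lia).
rewrite Lk_step; split.
  rewrite all_cat all_nseq /=; apply/andP; split; last by apply/orP; right; apply/andP; split; lia.
  apply: sub_all IHa => e /andP[h1 h2]; apply/andP; split; [apply: leq_trans h1 _ | apply: leq_trans h2 _]; lia.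
have n1 : all (fun e => ~~ inc _ (Ordinal ha) e) (Lk n D k).
  apply: sub_all IHa => e /andP[h1 h2].
  have h1' : (nat_of_ord e.1 < 2 * k)%N := h1.
  have h2' : (nat_of_ord e.2 < 2 * k)%N := h2.
  rewrite /inc negb_or; apply/andP; split; apply/eqP => /(congr1 (@nat_of_ord n)) /=; lia.
have qn0 : (q%:R : R) != 0 by rewrite pnatr_eq0 -lt0n.
apply: (mulfI qn0).
rewrite (vertex_eq _ (Ordinal ha) (Lk n D k) _ n1).
rewrite (eq_bigr (fun s => lam ^+ mu (Lk n D k) s * (lam ^+ D + (q%:R - 1)))); last first.
  move=> s _; congr (_ * _).
  rewrite -(inner_sum (s (Ordinal hb)) D); apply: eq_bigr => c _.
  rewrite /mu count_nseq /= !ffunE eqxx.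
  have -> : (Ordinal hb == Ordinal ha) = false.
    by apply/negbTE/eqP => /(congr1 (@nat_of_ord n)) /=; lia.
  by rewrite eq_sym.
rewrite -mulr_suml -/(Zpart _ lam q) IHz -qh exprS; ring.
Qed.

End Aux.

Lemma ceildiv0 D : ceildiv 0 D = 0%N.
Proof. by case: D => // D; rewrite /ceildiv divn_small. Qed.

Theorem theorem3p1 (R : realFieldType) (q : nat) (lam : R) :
  (0 < q)%N -> 1 <= lam ->
  (forall (V : finType) (E : seq (V * V)), loopless E ->
     Zpart E lam q <= Zbound lam q #|V| (size E) (maxdeg E))
  /\
  (forall n m D : nat, (0 < n)%N -> (0 < m)%N -> (0 < D)%N ->
     (D %| m)%N -> (2 * (m %/ D) <= n)%N ->
     Zpart (Hedges n m D) lam q = Zbound lam q n m D).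
Proof.
move=> q0 lam1; split.
  move=> V E lE.
  have dE : forall u, (deg E u <= maxdeg E)%N by move=> u; exact: leq_bigmax.
  case: (posnP (maxdeg E)) => [D0|D0].
    case: E lE dE D0 => [|e E0] lE dE D0.
      by rewrite (Z_nil R q lam) /Zbound ceildiv0 expr0 mul1r.
    by have := dE e.1; rewrite D0 /deg /= eqxx.
  have H1 := @bound_ind R q lam q0 lam1 V _ D0 _ E (leqnn (size E)) lE dE.
  have H2 := @G_ceil R q lam q0 lam1 _ (size E) D0.
  change (Zbound lam q #|V| (size E) (maxdeg E)) with
    (h R q lam (maxdeg E) ^+ ceildiv (size E) (maxdeg E) * q%:R ^+ #|V|).
  apply: le_trans H1 _; rewrite mulrC; apply: ler_wpM2r => //.
  by rewrite exprn_ge0 // ler0n.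
move=> n m D n0 m0 D0 Dm hk.
have [_ HZ] := @Lk_prop R q lam q0 lam1 n D _ hk.
rewrite Hedges_Lk HZ /Zbound mulrC; congr (_ ^+ _ * _).
rewrite /ceildiv.
have -> : (m + D.-1 = m %/ D * D + D.-1)%N by rewrite divnK.
have hD : (D.-1 %/ D = 0)%N by apply: divn_small; lia.
by rewrite divnMDl // hD addn0.
Qed.
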